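(* Let $H$ be a bigraph. Then $H$ is a cocomparability bigraph if and only if $H^{++}$ is a strong cocomparability graph.
   Context: A bigraph is a bipartite graph with fixed colour classes $X,Y$. The Slash matrix is the $2\times2$ matrix with rows $(0,1)$ and $(1,0)$; a matrix contains it as a submatrix if there are rows $i<j$ and columns $k<l$ with entries $(i,k)=0$, $(i,l)=1$, $(j,k)=1$, $(j,l)=0$. A bigraph is a cocomparability bigraph if its biadjacency matrix (rows indexed by $X$, columns by $Y$) admits independent permutations of rows and of columns yielding a matrix not containing the Slash matrix as a submatrix. A reflexive graph (every vertex carries a loop) is a strong cocomparability graph if its adjacency matrix (1's on the diagonal) admits a simultaneous row-and-column permutation not containing the Slash matrix as a submatrix. For a bigraph $H$, $H^{++}$ is the reflexive graph obtained from $H$ by making each of the two colour classes a clique and adding a loop at every vertex. *)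

(* Defs.v *)
From mathcomp Require Import all_boot all_order all_algebra all_fingroup.
Set Implicit Arguments. Unset Strict Implicit. Unset Printing Implicit Defensive.

(* A bigraph H with colour classes X and Y is given by a relation E : X -> Y -> bool
   (E x y = true iff xy is an edge). *)

Definition contains_slash (m n : nat) (M : 'M[bool]_(m, n)) : Prop :=
  exists (i1 i2 : 'I_m) (k l : 'I_n),
    [/\ i1 < i2, k < l,
        M i1 k = false, M i1 l = true & M i2 k = true /\ M i2 l = false].

Definition biadj (X Y : finType) (E : X -> Y -> bool) : 'M[bool]_(#|X|, #|Y|) :=
  \matrix_(i < #|X|, j < #|Y|) E (enum_val i) (enum_val j).

Definition cocomparability_bigraph (X Y : finType) (E : X -> Y -> bool) : Prop :=
  exists (s : 'S_#|X|) (t : 'S_#|Y|),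
    ~ contains_slash (row_perm s (col_perm t (biadj E))).

Definition plusplus_adj (X Y : finType) (E : X -> Y -> bool) (u v : X + Y) : bool :=
  match u, v with
  | inl _, inl _ => true
  | inr _, inr _ => true
  | inl x, inr y => E x y
  | inr y, inl x => E x y
  end.

(* Adjacency matrix of a reflexive graph on a finite vertex type V (1's on the diagonal
   are part of adj, which must be reflexive). *)
Definition adjmx (V : finType) (adj : V -> V -> bool) : 'M[bool]_#|V| :=
  \matrix_(i < #|V|, j < #|V|) adj (enum_val i) (enum_val j).

Definition strong_cocomparability (V : finType) (adj : V -> V -> bool) : Prop :=
  exists s : 'S_#|V|, ~ contains_slash (row_perm s (col_perm s (adjmx adj))).

(* Main.v *)
Require Import Defs.
From mathcomp Require Import all_boot all_order all_algebra all_fingroup.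
From mathcomp Require Import zify.
Set Implicit Arguments. Unset Strict Implicit.

Section Aux.

Variable T : finType.
Variable r : T -> nat.
Hypothesis rinj : injective r.

Definition rk (x : T) := #|[pred y | r y < r x]|.

Lemma rk_lt x : rk x < #|T|.
Proof.
apply: proper_card; apply/properP; split; first by apply/subsetP.
by exists x => //; rewrite inE /= ltnn.
Qed.

Lemma rk_mono x y : r x < r y -> rk x < rk y.
Proof.
move=> lt; apply: proper_card; apply/properP; split.
  apply/subsetP => z; rewrite !inE /= => h; exact: ltn_trans h lt.
by exists x; rewrite !inE /= ?lt ?ltnn.
Qed.

Lemma rk_ltE x y : (rk x < rk y) = (r x < r y).
Proof.
case: (ltngtP (r x) (r y)) => h.
- exact: rk_mono.
- by apply/negbTE; rewrite -leqNgt ltnW // rk_mono.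
- by rewrite (rinj h) ltnn.
Qed.

Definition hrk (x : T) : 'I_#|T| := Ordinal (rk_lt x).

Lemma f_inj : injective (fun j : 'I_#|T| => hrk (enum_val j)).
Proof.
move=> i j /(congr1 val) /= e; apply: enum_val_inj.
case: (ltngtP (r (enum_val i)) (r (enum_val j))) => h.
- by move: (rk_mono h); rewrite e ltnn.
- by move: (rk_mono h); rewrite e ltnn.
- exact: rinj.
Qed.

Lemma perm_of_rank : exists s : 'S_#|T|, forall i j : 'I_#|T|,
  (i < j) = (r (enum_val (s i)) < r (enum_val (s j))).
Proof.
exists (perm f_inj)^-1%g => i j.
have H k : hrk (enum_val ((perm f_inj)^-1%g k)) = k.
  by rewrite -[RHS](permKV (perm f_inj)) permE.
by rewrite -rk_ltE -{1}(H i) -{1}(H j).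
Qed.

End Aux.

Definition good_bi (X Y : finType) (E : X -> Y -> bool) (rx : X -> nat) (ry : Y -> nat) :=
  forall x1 x2 y1 y2, rx x1 < rx x2 -> ry y1 < ry y2 ->
    E x1 y1 = false -> E x1 y2 = true -> E x2 y1 = true -> E x2 y2 = false -> False.

Definition good_g (V : finType) (adj : V -> V -> bool) (r : V -> nat) :=
  forall u1 u2 v1 v2, r u1 < r u2 -> r v1 < r v2 ->
    adj u1 v1 = false -> adj u1 v2 = true -> adj u2 v1 = true -> adj u2 v2 = false -> False.

Lemma cocomp_rank (X Y : finType) (E : X -> Y -> bool) :
  cocomparability_bigraph E ->
  exists rx ry, [/\ injective rx, injective ry, forall x, rx x < #|X| & good_bi E rx ry].
Proof.
move=> [s [t H]].
exists (fun x => val (s^-1%g (enum_rank x))), (fun y => val (t^-1%g (enum_rank y))).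
split.
- by move=> a b /val_inj /perm_inj /enum_rank_inj.
- by move=> a b /val_inj /perm_inj /enum_rank_inj.
- by move=> x; apply: ltn_ord.
move=> x1 x2 y1 y2 l1 l2 e1 e2 e3 e4; apply: H.
exists (s^-1%g (enum_rank x1)), (s^-1%g (enum_rank x2)),
  (t^-1%g (enum_rank y1)), (t^-1%g (enum_rank y2)).
by rewrite !mxE !permKV !enum_rankK.
Qed.

Lemma rank_cocomp (X Y : finType) (E : X -> Y -> bool) rx ry :
  injective rx -> injective ry -> good_bi E rx ry -> cocomparability_bigraph E.
Proof.
move=> ix iy G.
have [s Hs] := perm_of_rank ix; have [t Ht] := perm_of_rank iy.
exists s, t => [[i1 [i2 [k [l [l1 l2 e1 e2 [e3 e4]]]]]]].
move: e1 e2 e3 e4; rewrite !mxE => e1 e2 e3 e4.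
by apply: (G _ _ _ _ _ _ e1 e2 e3 e4); rewrite -?Hs -?Ht.
Qed.

Lemma strong_rank (V : finType) (adj : V -> V -> bool) :
  strong_cocomparability adj -> exists r, injective r /\ good_g adj r.
Proof.
move=> [s H].
exists (fun x => val (s^-1%g (enum_rank x))); split.
- by move=> a b /val_inj /perm_inj /enum_rank_inj.
move=> x1 x2 y1 y2 l1 l2 e1 e2 e3 e4; apply: H.
exists (s^-1%g (enum_rank x1)), (s^-1%g (enum_rank x2)),
  (s^-1%g (enum_rank y1)), (s^-1%g (enum_rank y2)).
by rewrite !mxE !permKV !enum_rankK.
Qed.

Lemma rank_strong (V : finType) (adj : V -> V -> bool) r :
  injective r -> good_g adj r -> strong_cocomparability adj.
Proof.
move=> ir G.
have [s Hs] := perm_of_rank ir.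
exists s => [[i1 [i2 [k [l [l1 l2 e1 e2 [e3 e4]]]]]]].
move: e1 e2 e3 e4; rewrite !mxE => e1 e2 e3 e4.
by apply: (G _ _ _ _ _ _ e1 e2 e3 e4); rewrite -?Hs.
Qed.

Theorem theorem12 (X Y : finType) (E : X -> Y -> bool) :
  cocomparability_bigraph E <-> strong_cocomparability (plusplus_adj E).
Proof.
split.
- move=> /cocomp_rank [rx [ry [ix iy bx G]]].
  pose r (u : X + Y) := match u with inl x => rx x | inr y => #|X| + ry y end.
  apply: (@rank_strong _ _ r).
    move=> [a|a] [b|b] /= e.
    + by rewrite (ix _ _ e).
    + by exfalso; move: (bx a); rewrite e ltnNge leq_addr.
    + by exfalso; move: (bx b); rewrite -e ltnNge leq_addr.
    + by move/addnI: e => /iy ->.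
  have C x n : #|X| + n < rx x -> False.
    by move=> h; have := leq_ltn_trans (leq_addr n _) (ltn_trans h (bx x)); rewrite ltnn.
  move=> [x1|y1] [x2|y2] [a1|b1] [a2|b2] /= h1 h2 e1 e2 e3 e4 //.
  all: try by case: (C _ _ h1).
  all: try by case: (C _ _ h2).
  all: try rewrite ltn_add2l in h1; try rewrite ltn_add2l in h2.
  all: try exact: (G _ _ _ _ h1 h2 e1 e2 e3 e4).
  all: try exact: (G _ _ _ _ h2 h1 e1 e3 e2 e4).
- move=> /strong_rank [r [ir G]].
  apply: (@rank_cocomp _ _ _ (fun x => r (inl x)) (fun y => r (inr y))).
  + by move=> a b /ir [].
  + by move=> a b /ir [].
  move=> x1 x2 y1 y2 h1 h2 e1 e2 e3 e4.
  exact: (G (inl x1) (inl x2) (inr y1) (inr y2) h1 h2 e1 e2 e3 e4).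
Qed.
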